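(* Suppose the basic set of weighting functions is used, and suppose that (i) Assumption A8 holds and (ii) $K$ has support $[-1,1]$, is continuous, and is strictly positive on $(-1,1)$. Then Assumption A9 holds.
   Context: For each $n$, $X_1,\dots,X_n$ are i.i.d. copies of a scalar random variable $X$ with support infimum $s_l$ and supremum $s_r$. Basic set of weighting functions: $\mathcal{S}_n=\{(x,h):x\in\{X_1,\dots,X_n\},h\in H_n\}$, $H_n=\{h=h_{\max}u^l:h\ge h_{\min},l=0,1,2,\dots\}$, $u=0.5$, $h_{\max}=\max_{i,j}|X_i-X_j|/2$, $h_{\min}=0.4h_{\max}(\log n/n)^{1/3}$, with kernel weighting functions $Q(x_1,x_2,(x,h))=|x_1-x_2|^kK((x_1-x)/h)K((x_2-x)/h)$ for a fixed $k\ge0$; $p=|\mathcal{S}_n|$. A8: $c_3(x_2-x_1)\le\Pr(X\in[x_1,x_2])\le C_3(x_2-x_1)$ for all $[x_1,x_2]\subset[s_l,s_r]$, constants $c_3,C_3>0$. A9 (for fixed $\beta\in(0,1]$, $h_n=(\log p/n)^{1/(2\beta+3)}$, and some constants $c_4,C_4,c_5>0$): with probability approaching one, for all $[x_1,x_2]\subset[s_l,s_r]$ with $x_2-x_1=h_n$ there exists $s\in\mathcal{S}_n$ such that (i) the support of $Q(\cdot,\cdot,s)$ is contained in $[x_1,x_2]^2$, (ii) $Q(\cdot,\cdot,s)\le C_4h_n^k$, (iii) there are non-intersecting subintervals $[x_{l1},x_{r1}],[x_{l2},x_{r2}]$ of $[x_1,x_2]$ with $x_{r1}-x_{l1}\ge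 c_5h_n$, $x_{r2}-x_{l2}\ge c_5h_n$, $x_{l2}-x_{r1}\ge c_5h_n$, and $Q(y_1,y_2,s)\ge c_4h_n^k$ whenever $y_1\in[x_{l1},x_{r1}]$, $y_2\in[x_{l2},x_{r2}]$. *)

(* Defs.v *)
From HB Require Import structures.
From mathcomp Require Import all_boot all_order all_algebra.
From mathcomp Require Import finmap.
From mathcomp Require Import all_classical all_reals all_analysis.
Set Implicit Arguments. Unset Strict Implicit. Unset Printing Implicit Defensive.
Import Order.TTheory GRing.Theory Num.Theory.
Import numFieldNormedType.Exports.
Local Open Scope classical_set_scope.
Local Open Scope ring_scope.

Definition mutually_independent (d : measure_display) (T : measurableType d)
    (R : realType) (P : probability T R) (X : nat -> T -> R) : Prop :=
  forall (I : {fset nat}) (B : nat -> set R),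
    (forall i, i \in I -> measurable (B i)) ->
    P (\bigcap_(i in [set` I]) (X i @^-1` B i)) =
    (\prod_(i <- I) P (X i @^-1` B i))%E.

Definition same_law (d : measure_display) (T : measurableType d)
    (R : realType) (P : probability T R) (Y X0 : T -> R) : Prop :=
  forall B : set R, measurable B -> P (Y @^-1` B) = P (X0 @^-1` B).

Definition open_itv (R : realType) (x e : R) : set R := `]x - e, x + e[.

Definition law_support (d : measure_display) (T : measurableType d)
    (R : realType) (P : probability T R) (X0 : T -> R) : set R :=
  [set x | forall e : R, 0 < e -> (0 < P (X0 @^-1` open_itv x e))%E].

Definition supp_inf (d : measure_display) (T : measurableType d)
    (R : realType) (P : probability T R) (X0 : T -> R) : \bar R :=
  ereal_inf [set x%:E | x in law_support P X0].
Definition supp_sup (d : measure_display) (T : measurableType d)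
    (R : realType) (P : probability T R) (X0 : T -> R) : \bar R :=
  ereal_sup [set x%:E | x in law_support P X0].

Definition assumption_A8 (d : measure_display) (T : measurableType d)
    (R : realType) (P : probability T R) (X0 : T -> R) : Prop :=
  exists c3 C3 : R, 0 < c3 /\ 0 < C3 /\
    forall x1 x2 : R, x1 <= x2 ->
      (supp_inf P X0 <= x1%:E)%E -> (x2%:E <= supp_sup P X0)%E ->
      ((c3 * (x2 - x1))%R%:E <= P (X0 @^-1` `[x1, x2]))%E /\
      (P (X0 @^-1` `[x1, x2]) <= (C3 * (x2 - x1))%R%:E)%E.

Section Basic.
Variable R : realType.

Definition u_ratio : R := 2^-1.

Definition h_max (n : nat) (xs : nat -> R) : R :=
  \big[Num.max/0]_(i < n) \big[Num.max/0]_(j < n) (`|xs i - xs j| / 2).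

Definition h_min (n : nat) (xs : nat -> R) : R :=
  (2 / 5) * h_max n xs * ((ln (n%:R) / n%:R) `^ (3^-1)).

Definition H_set (n : nat) (xs : nat -> R) : set R :=
  [set h | exists l : nat, h = h_max n xs * u_ratio ^+ l /\ h_min n xs <= h].

Definition S_set (n : nat) (xs : nat -> R) : set (R * R) :=
  [set s | (exists i : nat, (i < n)%N /\ s.1 = xs i) /\ H_set n xs s.2].

Definition p_card (n : nat) (xs : nat -> R) : nat :=
  (#|` fset_set (S_set n xs) |)%fset.

Definition Qw (k : R) (K : R -> R) (y1 y2 : R) (s : R * R) : R :=
  `|y1 - y2| `^ k * K ((y1 - s.1) / s.2) * K ((y2 - s.1) / s.2).

Definition h_n (beta : R) (n : nat) (xs : nat -> R) : R :=
  (ln ((p_card n xs)%:R) / n%:R) `^ (1 / (2 * beta + 3)).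

Definition A9_event (k : R) (K : R -> R) (sl sr : \bar R)
    (beta c4 C4 c5 : R) (n : nat) (xs : nat -> R) : Prop :=
  let hn := h_n beta n xs in
  forall x1 x2 : R,
    (sl <= x1%:E)%E -> (x2%:E <= sr)%E -> x2 - x1 = hn ->
    exists s : R * R, S_set n xs s /\
      closure [set y : R * R | Qw k K y.1 y.2 s != 0]
        `<=` `[x1, x2] `*` `[x1, x2] /\
      (forall y1 y2 : R, Qw k K y1 y2 s <= C4 * hn `^ k) /\
      (exists xl1 xr1 xl2 xr2 : R,
        `[xl1, xr1] `<=` `[x1, x2] /\ `[xl2, xr2] `<=` `[x1, x2] /\
        `[xl1, xr1] `&` `[xl2, xr2] = set0 /\
        c5 * hn <= xr1 - xl1 /\ c5 * hn <= xr2 - xl2 /\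
        c5 * hn <= xl2 - xr1 /\
        (forall y1 y2 : R, xl1 <= y1 <= xr1 -> xl2 <= y2 <= xr2 ->
           c4 * hn `^ k <= Qw k K y1 y2 s)).

End Basic.

(* "with probability approaching one": there are events A_n, each contained
   in the event E_n, with P(A_n) -> 1 (inner-probability reading). *)
Definition wpa1 (d : measure_display) (T : measurableType d)
    (R : realType) (P : probability T R) (E : nat -> set T) : Prop :=
  exists A : nat -> set T,
    (forall n, measurable (A n) /\ A n `<=` E n) /\
    (P (A n) @[n --> \oo] --> 1%E).

(* Assumption A9 for the i.i.d. sample X_0, X_1, ... (a sample of size n is
   X_0, ..., X_(n-1)), for a given beta. *)
Definition assumption_A9 (d : measure_display) (T : measurableType d)
    (R : realType) (P : probability T R) (X : nat -> T -> R) (X0 : T -> R)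
    (k : R) (K : R -> R) (beta : R) : Prop :=
  exists c4 C4 c5 : R, 0 < c4 /\ 0 < C4 /\ 0 < c5 /\
    wpa1 P (fun n => [set w | A9_event k K (supp_inf P X0) (supp_sup P X0)
                                 beta c4 C4 c5 n (fun i => X i w)]).

(* Main.v *)
Require Import Defs.
From HB Require Import structures.
From mathcomp Require Import all_boot all_order all_algebra.
From mathcomp Require Import finmap.
From mathcomp Require Import all_classical all_reals all_analysis.
From mathcomp Require Import ring lra zify.
Set Implicit Arguments. Unset Strict Implicit. Unset Printing Implicit Defensive.
Import Order.TTheory GRing.Theory Num.Theory.
Import numFieldNormedType.Exports.
Local Open Scope classical_set_scope.
Local Open Scope ring_scope.

Section PartA.
Variable R : realType.

Lemma K_supp (K : R -> R) :
  closure [set x | K x != 0] = `[-1, 1]%classic ->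
  forall x, K x != 0 -> -1 <= x <= 1.
Proof.
move=> hcl x Kx.
have : closure [set x | K x != 0] x by exact: subset_closure.
by rewrite hcl /= in_itv.
Qed.

Lemma K_bound (K : R -> R) :
  closure [set x | K x != 0] = `[-1, 1]%classic -> continuous K ->
  exists M, 0 < M /\ forall x, `|K x| <= M.
Proof.
move=> hcl cK.
have cf : continuous (fun x => `|K x|).
  move=> x; apply: continuous_comp; first exact: cK.
  exact: norm_continuous.
have h11 : -1 <= (1 : R) by lra.
have [c _ hc] := @EVT_max R (fun x => `|K x|) (-1) 1 h11
  (continuous_subspaceT cf).
 exists (`|K c| + 1); split; first by rewrite ltr_wpDl.
move=> x; have [/eqP ->|Kx] := boolP (K x == 0).
  by rewrite normr0 ltW // ltr_wpDl.
have /K_supp := Kx; move=> /(_ hcl) hx.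
apply: le_trans (hc x _) _; first by rewrite in_itv.
by rewrite lerDl.
Qed.

Lemma K_lower (K : R -> R) : continuous K ->
  (forall x : R, -1 < x < 1 -> 0 < K x) ->
  exists kap, 0 < kap /\ forall x, -(3/4) <= x <= 3/4 -> kap <= K x.
Proof.
move=> cK Kpos.
have h34 : -(3/4) <= (3/4 : R) by lra.
have [c] := @EVT_min R K (-(3/4)) (3/4) h34 (continuous_subspaceT cK).
 rewrite in_itv /= => /andP[c1 c2] hc; exists (K c); split.
  by apply: Kpos; apply/andP; split; lra.
by move=> x hx; apply: hc; rewrite in_itv.
Qed.
End PartA.

Section PartB.
Variable R : realType.

Lemma hmax_le n (xs : nat -> R) sl sr :
  (forall i, (i < n)%N -> sl <= xs i <= sr) -> sl <= sr ->
  h_max n xs <= (sr - sl) / 2.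
Proof.
move=> H hsr; rewrite /h_max; apply: bigmax_le => [|i _]; first lra.
apply: bigmax_le => [|j _]; first lra.
have := H i (ltn_ord i); have := H j (ltn_ord j) => h1 h2.
have : `|xs i - xs j| <= sr - sl by rewrite ler_norml; lra.
lra.
Qed.

Lemma hmax_ge n (xs : nat -> R) i j : (i < n)%N -> (j < n)%N ->
  `|xs i - xs j| / 2 <= h_max n xs.
Proof.
move=> hi hj; rewrite /h_max.
apply: le_trans (le_bigmax _ _ (Ordinal hi)).
exact: (le_bigmax _ (fun j0 : 'I_n => `|xs (Ordinal hi) - xs j0| / 2) (Ordinal hj)).
Qed.

Lemma u_pow l : u_ratio R ^+ l = (2 ^+ l)^-1 :> R.
Proof. by rewrite /u_ratio exprVn. Qed.

Lemma halving (A B : R) : 0 < B -> B / 2 < A ->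
  exists l, B / 2 < A * u_ratio R ^+ l <= B.
Proof.
move=> B0 hA.
have A0 : 0 < A by lra.
have ex : exists l, (fun l => A * u_ratio R ^+ l <= B) l.
  exists (Num.Def.archi_bound (A / B)).
  have := @upper_nthrootP R (A / B) _ (leqnn _).
  rewrite u_pow ltr_pdivrMr // => h.
  have p2 : 0 < 2 ^+ Num.Def.archi_bound (A / B) :> R by apply: exprn_gt0.
  by rewrite -/(A / _) ler_pdivrMr // mulrC ltW.
case: (ex_minnP ex) => l hl hmin; exists l; rewrite hl andbT.
case: l hl hmin => [|l] hl hmin; first by rewrite expr0 mulr1.
have : ~~ (A * u_ratio R ^+ l <= B).
  by apply/negP => /hmin; rewrite ltnn.
rewrite -ltNge exprS mulrCA /u_ratio => h; lra.
Qed.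

Lemma cell_find (w : R) (N : nat) (y : R) : 0 < w -> (0 < N)%N ->
  0 <= y <= N%:R * w ->
  exists2 j, (j < N)%N & j%:R * w <= y <= j%:R * w + w.
Proof.
move=> w0 N0 /andP[y0 yN].
have yw0 : 0 <= y / w by rewrite divr_ge0 // ltW.
have /andP[t1 t2] := truncn_itv yw0.
move: t1 t2; set j0 := Num.trunc (y / w) => t1 t2.
rewrite ler_pdivlMr // in t1.
rewrite ltr_pdivrMr // -natr1 in t2.
case: (ltnP j0 N) => hj.
  by exists j0 => //; rewrite t1 /=; lra.
case: N N0 yN hj => [//|N'] _ yN hj; exists N' => //.
rewrite -natr1 in yN.
have : N'.+1%:R <= j0%:R :> R by rewrite ler_nat.
rewrite -natr1 => h.
apply/andP; split; last lra.
have : N'%:R * w <= j0%:R * w by rewrite ler_pM2r //; lra.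
lra.
Qed.

End PartB.

Section PartB3.
Variable R : realType.

Lemma closed_box (a b : R) : closed (`[a, b] `*` `[a, b] : set (R * R)).
Proof.
have -> : (`[a, b] `*` `[a, b] : set (R * R)) = fst @^-1` `[a, b] `&` snd @^-1` `[a, b] by [].
apply: closedI.
  have cf : continuous (@fst R R) by move=> [x y]; exact: cvg_fst.
  by move/continuous_closedP : cf; apply; exact: itv_closed.
have cf : continuous (@snd R R) by move=> [x y]; exact: cvg_snd.
by move/continuous_closedP : cf; apply; exact: itv_closed.
Qed.

Lemma S_finite n (xs : nat -> R) : 0 < h_min n xs -> finite_set (S_set n xs).
Proof.
move=> hm0.
set M := Num.Def.archi_bound (h_max n xs / h_min n xs).
apply: (@sub_finite_set _ _
  [set (fun i l => (xs i, h_max n xs * u_ratio R ^+ l)) i l | i in `I_n & l in `I_M]).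
  move=> [s1 s2] [[i [hi /= e1]]] [l [e2 hl]] /=.
  exists i => //; exists l; last by rewrite -e1 -e2.
  rewrite /= ltnNge; apply/negP => hM.
  have := @upper_nthrootP R _ _ hM.
  rewrite ltr_pdivrMr // => h1.
  move: hl; rewrite e2 u_pow ler_pdivlMr ?exprn_gt0 // => h2.
  lra.
by apply: finite_image2; exact: finite_II.
Qed.

Lemma p_ge2 n (xs : nat -> R) e1 e2 : finite_set (S_set n xs) ->
  S_set n xs e1 -> S_set n xs e2 -> e1 != e2 -> (2 <= p_card n xs)%N.
Proof.
move=> fS h1 h2 ne; rewrite /p_card.
have <- : #|` [fset e1; e2]%fset| = 2%N by rewrite cardfs2 ne.
apply: fsubset_leq_card; apply/fsubsetP => x; rewrite !inE => /orP[] /eqP ->;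
  by rewrite in_fset_set //; apply/mem_set.
Qed.

Lemma hn_ge n (xs : nat -> R) beta : 0 < beta -> (0 < n)%N ->
  (2 <= p_card n xs)%N ->
  (ln 2 / n%:R) `^ (1 / (2 * beta + 3)) <= h_n beta n xs.
Proof.
move=> b0 n0 p2; rewrite /h_n.
have nr : 0 < n%:R :> R by rewrite ltr0n.
have l2 : 0 < ln (2 : R) by apply: ln_gt0; lra.
apply: ge0_ler_powR.
- by rewrite divr_ge0 //; lra.
- by rewrite nnegrE divr_ge0 // ltW.
- have : 0 < (p_card n xs)%:R :> R by rewrite ltr0n; apply: leq_trans p2.
  move=> p0; rewrite nnegrE; apply: divr_ge0; last exact: ltW.
  by apply: ln_ge0; rewrite (ler_nat _ 1); apply: leq_trans p2.
- rewrite ler_pM2r ?invr_gt0 // ler_ln ?posrE //; first by rewrite (ler_nat _ 2).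
  by rewrite ltr0n; apply: leq_trans p2.
Qed.

End PartB3.

Section PartB4.
Variable R : realType.

Lemma det_event (k beta : R) (K : R -> R) (M kap : R) (n N : nat)
    (xs : nat -> R) (sl sr : R) :
  0 <= k -> 0 < beta ->
  (forall x, K x != 0 -> -1 <= x <= 1) ->
  (forall x, `|K x| <= M) ->
  0 < kap -> (forall x, -(3/4) <= x <= 3/4 -> kap <= K x) ->
  (2 <= n)%N -> (5 <= N)%N -> sl < sr ->
  8 * ((sr - sl) / N%:R) <= (ln 2 / n%:R) `^ (1 / (2 * beta + 3)) ->
  (sr - sl) / 5 * (ln n%:R / n%:R) `^ (3^-1) <=
     (ln 2 / n%:R) `^ (1 / (2 * beta + 3)) / 8 ->
  (forall i, (i < n)%N -> sl <= xs i <= sr) ->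
  (forall j, (j < N)%N -> exists2 i, (i < n)%N &
     sl + j%:R * ((sr - sl) / N%:R) <= xs i <=
     sl + j%:R * ((sr - sl) / N%:R) + (sr - sl) / N%:R) ->
  A9_event k K sl%:E sr%:E beta (kap ^+ 2 * (1/16) `^ k) (M ^+ 2) (1/16) n xs.
Proof.
move=> k0 b0 Ksupp KM kap0 Klow n2 N5 slr H8w Hmin Hin Hcov.
move: H8w Hmin Hcov.
set L := sr - sl; set w := L / N%:R; set hlo := (ln 2 / n%:R) `^ _.
set t := (ln n%:R / n%:R) `^ _ => H8w Hmin Hcov.
have L0 : 0 < L by rewrite /L; lra.
have N0 : (0 < N)%N by apply: leq_trans N5.
have Nr : 0 < N%:R :> R by rewrite ltr0n.
have w0 : 0 < w by rewrite divr_gt0.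
have NwL : N%:R * w = L by rewrite /w mulrC divfK // gt_eqF.
have N5r : 5 <= N%:R :> R by rewrite (ler_nat _ 5).
have w5 : 5 * w <= L by rewrite -NwL ler_pM2r.
have nr : 1 < n%:R :> R by rewrite (ltr_nat _ 1).
have n0 : 0 < n%:R :> R by lra.
have l2 : 0 < ln (2 : R) by apply: ln_gt0; lra.
have hlo0 : 0 < hlo by apply: powR_gt0; rewrite divr_gt0.
have [i0 i0n hi0] := Hcov 0%N N0.
have [i2 i2n hi2] := Hcov 2%N (leq_trans (isT : (2 < 5)%N) N5).
have [iN iNn hiN] := Hcov N.-1 (ltac:(by rewrite prednK)).
rewrite mul0r addr0 in hi0.
have eN : N.-1%:R = N%:R - 1 :> R by rewrite -{2}(prednK N0) -natr1 addrK.
rewrite eN mulrBl mul1r NwL in hiN.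
have hmax_lo : 3 * L / 10 <= h_max n xs.
  apply: le_trans (hmax_ge xs iNn i0n).
  have : xs iN - xs i0 <= `|xs iN - xs i0| by exact: ler_norm.
  move: hi0 hiN => /andP[a1 a2] /andP[a3 a4]; lra.
have hmax_hi : h_max n xs <= L / 2 by apply: hmax_le => //; lra.
have t0 : 0 < t by apply: powR_gt0; rewrite divr_gt0 // ln_gt0.
have t1 : t <= 1.
  have hlb : 0 < @ln R n%:R / n%:R <= 1.
    apply/andP; split; first by apply: divr_gt0 => //; apply: ln_gt0.
    rewrite ler_pdivrMr // mul1r ltW //.
    exact: ln_sublinear.
  rewrite /t -[leRHS](powRr0 (ln n%:R / n%:R)).
  by apply: ger_powR => //; rewrite invr_ge0.
have hmin_def : h_min n xs = 2 / 5 * h_max n xs * t by [].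
have hmin0 : 0 < h_min n xs.
  by rewrite hmin_def mulr_gt0 // mulr_gt0 //; lra.
have hmin_le : h_min n xs <= hlo / 8.
  have : h_max n xs * t <= L / 2 * t by rewrite ler_wpM2r // ltW.
  rewrite hmin_def; lra.
have hmin_hmax : h_min n xs <= h_max n xs.
  have : h_max n xs * t <= h_max n xs by rewrite ler_piMr //; lra.
  rewrite hmin_def; lra.
have Sfin : finite_set (S_set n xs) by exact: S_finite.
have hmaxH : H_set n xs (h_max n xs) by exists 0%N; rewrite expr0 mulr1.
have p2 : (2 <= p_card n xs)%N.
  apply: (@p_ge2 _ _ _ (xs i0, h_max n xs) (xs i2, h_max n xs)) => //.
  - by split => //; exists i0.
  - by split => //; exists i2.
  - apply/negP => /eqP [] e.
    move: hi0 hi2; rewrite e => /andP[a1 a2] /andP[a3 a4].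
    have : (2%:R : R) = 2 by [].
    lra.
have hn_lo : hlo <= h_n beta n xs by apply: hn_ge => //; apply: leq_trans n2.
rewrite /A9_event; move: hn_lo; set hn := h_n beta n xs => hn_lo.
clear Hin hi0 hi2 hiN i0 i0n i2 i2n iN iNn t0 t1 hmin_def hmin0 hmin_hmax Sfin
  hmaxH p2 eN N5r nr n0 l2 Hmin w5.
move=> x1 x2; rewrite !lee_fin => hx1 hx2 hx12.
have hn0 : 0 < hn by apply: lt_le_trans hn_lo.
have hnL : hn <= L by rewrite /L; lra.
set m := (x1 + x2) / 2.
have [j jN hj] := @cell_find R w N (m - sl) w0 N0
  (ltac:(rewrite NwL /m /L; apply/andP; split; lra)).
have [i iin hi] := Hcov j jN.
have xm : `|xs i - m| <= w.
  rewrite ler_norml; move: hj hi => /andP[a1 a2] /andP[a3 a4].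
  apply/andP; split; lra.
have [l hl] := @halving R (h_max n xs) (hn / 4) (ltac:(lra)) (ltac:(lra)).
move: hl; set h := h_max n xs * _ => /andP[hl1 hl2].
have hH : H_set n xs h by exists l; split => //; lra.
set x := xs i.
have h0 : 0 < h by lra.
clear hmin_le hj hi Hcov jN.
have bnd : x1 <= x - h /\ x + h <= x2.
  move: xm; rewrite ler_norml /x /m => /andP[a1 a2]; split; lra.
have supp : forall y, K ((y - x) / h) != 0 -> x - h <= y <= x + h.
  move=> y /Ksupp /andP[a1 a2].
  rewrite ler_pdivlMr // in a1; rewrite ler_pdivrMr // in a2.
  apply/andP; split; lra.
exists (x, h); split; first by split => //; exists i.
clear hH iin xm hmax_lo hmax_hi hlo0 hn_lo hx1 hx2 hnL H8w.
split.
  have sub : [set y : R * R | Qw k K y.1 y.2 (x, h) != 0] `<=`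
      `[x - h, x + h] `*` `[x - h, x + h].
    move=> [y1 y2] /=; rewrite /Qw /= => hq.
    rewrite !mulf_eq0 !negb_or in hq; case/andP: hq => /andP[_ q1] q2.
    by split => /=; rewrite in_itv /=; apply: supp.
  move=> y /(closureS sub).
  have := @closed_box R (x - h) (x + h); rewrite closure_id => <-.
  case: y => y1 y2 [] /=; rewrite !in_itv /= => /andP[a1 a2] /andP[a3 a4].
  by split; apply/andP; split; lra.
split.
  move=> y1 y2; rewrite /Qw /=.
  have Mpos : 0 <= M by apply: le_trans (KM 0); exact: normr_ge0.
  have pos : 0 <= M ^+ 2 * hn `^ k by rewrite mulr_ge0 ?sqr_ge0 ?powR_ge0.
  case: (eqVneq (K ((y1 - x) / h)) 0) => [->|K1]; first by rewrite mulr0 mul0r.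
  case: (eqVneq (K ((y2 - x) / h)) 0) => [->|K2]; first by rewrite mulr0.
  have := supp _ K1; have := supp _ K2 => /andP[s1 s2] /andP[s3 s4].
  have d : `|y1 - y2| <= hn by rewrite ler_norml; apply/andP; split; lra.
  apply: le_trans (ler_norm _) _.
  rewrite !normrM norm_powR ?normr_ge0 // normr_id.
  have pw : `|y1 - y2| `^ k <= hn `^ k.
    by apply: ge0_ler_powR => //; rewrite nnegrE ?normr_ge0 // ltW.
  rewrite (_ : M ^+ 2 * hn `^ k = hn `^ k * M * M); last by rewrite expr2; ring.
  apply: ler_pM; [by rewrite mulr_ge0 ?powR_ge0| by [] | | by []].
  by apply: ler_pM; [rewrite powR_ge0| by [] | by [] | by []].
exists (x - 3 * h / 4), (x - h / 4), (x + h / 4), (x + 3 * h / 4).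
split.
  move=> y /=; rewrite !in_itv /= => /andP[a1 a2]; apply/andP; split; lra.
split.
  move=> y /=; rewrite !in_itv /= => /andP[a1 a2]; apply/andP; split; lra.
split.
  apply/seteqP; split => // y /=; rewrite !in_itv /= => -[/andP[a1 a2] /andP[a3 a4]].
  lra.
split; first lra.
split; first lra.
split; first lra.
move=> y1 y2 /andP[a1 a2] /andP[a3 a4].
have kz1 : kap <= K ((y1 - x) / h).
  by apply: Klow; rewrite ler_pdivlMr // ler_pdivrMr //; apply/andP; split; lra.
have kz2 : kap <= K ((y2 - x) / h).
  by apply: Klow; rewrite ler_pdivlMr // ler_pdivrMr //; apply/andP; split; lra.
have dy : hn * (1 / 16) <= `|y1 - y2|.
  rewrite distrC ger0_norm; lra.
have pw : (hn * (1 / 16)) `^ k <= `|y1 - y2| `^ k.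
  apply: ge0_ler_powR => //; rewrite nnegrE ?normr_ge0 //.
  by rewrite mulr_ge0 //; lra.
have e : kap ^+ 2 * (1 / 16) `^ k * hn `^ k = (hn * (1 / 16)) `^ k * kap * kap.
  rewrite powRM; [|lra|lra]; rewrite expr2; ring.
rewrite e.
apply: ler_pM; [by rewrite mulr_ge0 ?powR_ge0 // ltW| by rewrite ltW| |by []].
apply: ler_pM; [by rewrite powR_ge0| by rewrite ltW| by [] | by []].
Qed.

End PartB4.

Section PartC.
Context (d : measure_display) (T : measurableType d) (R : realType)
  (P : probability T R).

Lemma null_bigcup (F : nat -> set T) :
  (forall m, measurable (F m)) -> (forall m, P (F m) = 0%E) ->
  P (\bigcup_m F m) = 0%E.
Proof.
move=> mF F0; apply/eqP; rewrite eq_le measure_ge0 andbT.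
apply: le_trans (generalized_Boole_inequality P mF (bigcupT_measurable _ mF)) _.
by rewrite eseries0 // => i _ _; exact: F0.
Qed.

Lemma supp_left (f : T -> R) :
  (forall Y : set R, measurable Y -> measurable (f @^-1` Y)) ->
  forall a : R, supp_inf P f = a%:E -> P (f @^-1` `]-oo, a[) = 0%E.
Proof.
move=> mf a ha.
set B := fun m : nat => f @^-1` `]a - m.+1%:R, a - m.+1%:R^-1].
have mB : forall m, measurable (B m) by move=> m; apply: mf; exact: measurable_itv.
have sub : f @^-1` `]-oo, a[ `<=` \bigcup_m B m.
  move=> w /=; rewrite in_itv /= => fa.
  have d0 : 0 < a - f w by rewrite subr_gt0.
  pose m := Num.Def.archi_bound (a - f w + (a - f w)^-1).
  have hm := @archi_boundP R (a - f w + (a - f w)^-1) (ltac:(rewrite addr_ge0 // ?invr_ge0 ltW //)).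
  exists m => //; rewrite /B /= in_itv /=; apply/andP; split.
    have : a - f w < m.+1%:R.
      have : (a - f w)^-1 > 0 by rewrite invr_gt0.
      rewrite -natr1; lra.
    lra.
  have : (a - f w)^-1 < m.+1%:R.
    have : a - f w > 0 by [].
    rewrite -natr1; lra.
  move=> h1.
  have : m.+1%:R^-1 <= a - f w.
    rewrite -[leRHS]invrK lef_pV2 ?posrE ?invr_gt0 ?ltr0n //.
    exact: ltW.
  set q := m.+1%:R^-1; lra.
apply/eqP; rewrite eq_le measure_ge0 andbT.
have mU : measurable (f @^-1` `]-oo, a[) by apply: mf; exact: measurable_itv.
apply: le_trans (le_measure _ _ _ sub) _; [by rewrite inE|by rewrite inE; exact: bigcupT_measurable|].
rewrite le_eqVlt; apply/orP; left; apply/eqP.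
apply: null_bigcup => // m.
apply/eqP; rewrite eq_le measure_ge0 andbT leNgt; apply/negP => Bpos.
set lo := a - m.+1%:R; set x := a - m.+1%:R^-1.
set H := fun y : R => P (f @^-1` `]lo, y]).
have mI : forall y, measurable (f @^-1` `]lo, y]) by move=> y; apply: mf; exact: measurable_itv.
have Hmono : forall y z, y <= z -> (H y <= H z)%E.
  move=> y z yz; apply: le_measure; rewrite ?inE //.
  move=> w /=; rewrite !in_itv /= => /andP[-> /le_trans]; exact.
set S := [set y | (0 < H y)%E].
have Sx : S x by [].
have Slb : forall y, S y -> lo < y.
  move=> y Sy; rewrite ltNge; apply/negP => yl; move: Sy.
  rewrite /S /H /= (_ : f @^-1` `]lo, y] = set0) ?measure0 ?ltxx //.
  apply/seteqP; split => // w /=; rewrite in_itv /= => /andP[a1 a2].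
  have := lt_le_trans a1 a2; rewrite ltNge => /negP; apply; exact: yl.
have hlb : has_lbound S by exists lo => y /Slb /ltW.
have S0 : S !=set0 by exists x.
set b := inf S.
have bx : b <= x by apply: inf_lbound.
have bsupp : law_support P f b.
  move=> e e0.
  have [y Sy yb] := @inf_lt R S (b + e / 2) S0 (ltac:(rewrite ltrDl; lra)).
  have H1 : (0 < H (b + e / 2)%R)%E.
    by apply: (@lt_le_trans _ _ (H y)) => //; apply: Hmono; exact: ltW.
  have H2 : H (b - e) = 0%E.
    apply/eqP; rewrite eq_le measure_ge0 andbT leNgt; apply/negP => h.
    have : b <= b - e by apply: inf_lbound.
    lra.
  have mO : measurable (f @^-1` open_itv b e) by apply: mf; exact: measurable_itv.
  have sub2 : f @^-1` `]lo, b + e / 2] `<=` f @^-1` `]lo, b - e] `|` f @^-1` open_itv b e.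
    move=> w /=; rewrite /open_itv !in_itv /= => /andP[a1 a2].
    case: (leP (f w) (b - e)) => h; [left|right]; first by rewrite a1.
    rewrite in_itv /=; apply/andP; split; lra.
  have := le_measure P (mem_set (mI (b + e / 2))) (mem_set (measurableU _ _ (mI (b - e)) mO)) sub2.
  move=> h3.
  have h5 : (H (b + e / 2)%R <= P (f @^-1` `]lo, (b - e)%R]) + P (f @^-1` open_itv b e))%E.
    exact: le_trans h3 (measureU2 P (mI (b - e)) mO).
  have H2' : P (f @^-1` `]lo, b - e]) = 0%E := H2.
  rewrite H2' add0e in h5.
  exact: lt_le_trans H1 h5.
have : (a%:E <= b%:E)%E.
  rewrite -ha; apply: ereal_inf_lbound; exists b => //.
rewrite lee_fin /x => ab.
have : 0 < m.+1%:R^-1 :> R by rewrite invr_gt0 ltr0n.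
move: bx ab; rewrite /b /x; set q := m.+1%:R^-1; lra.
Qed.

End PartC.

Section PartC2.
Context (d : measure_display) (T : measurableType d) (R : realType)
  (P : probability T R).

Lemma supp_neg (f : T -> R) :
  supp_inf P (fun w => - f w) = (- supp_sup P f)%E.
Proof.
rewrite /supp_sup ereal_supEN oppeK /supp_inf; congr ereal_inf.
have eq_supp : forall x, law_support P (fun w => - f w) x <-> law_support P f (- x).
  move=> x.
  have pre : forall e, (fun w => - f w) @^-1` open_itv x e = f @^-1` open_itv (- x) e.
    move=> e; apply/seteqP; split => w; rewrite /open_itv /= !in_itv /=;
      move=> /andP[a1 a2]; apply/andP; split; lra.
  by split => h e e0; [rewrite -pre | rewrite pre]; apply: h.
apply/seteqP; split => z /=.
  move=> [y /eq_supp hy <-]; exists (- y%:E)%E; first by exists (- y).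
  by rewrite oppeK.
move=> [z' [y hy <-] <-]; exists (- y); last by [].
by apply/eq_supp; rewrite opprK.
Qed.

Lemma supp_right (f : T -> R) :
  (forall Y : set R, measurable Y -> measurable (f @^-1` Y)) ->
  forall b : R, supp_sup P f = b%:E -> P (f @^-1` `]b, +oo[) = 0%E.
Proof.
move=> mf b hb.
have mg : forall Y : set R, measurable Y -> measurable ((fun w => - f w) @^-1` Y).
  move=> Y mY.
  have := @measurable_realfun.oppr_measurable R setT measurableT Y mY; rewrite setTI => h.
  exact: (mf _ h).
have := @supp_left d T R P _ mg (- b); rewrite supp_neg hb /= => /(_ erefl).
congr (P _ = _); apply/seteqP; split => w /=; rewrite !in_itv /= andbT; lra.
Qed.

End PartC2.

Section PartD.
Context (d : measure_display) (T : measurableType d) (R : realType)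
  (P : probability T R).

Lemma probE (A : set T) : measurable A -> P A = (fine (P A))%:E.
Proof. by move=> mA; rewrite fineK // fin_num_measure. Qed.

Lemma indep_cap (X : nat -> T -> R) (X0 : T -> R) (n : nat) (B : set R) :
  mutually_independent P X -> (forall i, same_law P (X i) X0) ->
  measurable B -> measurable (X0 @^-1` B) ->
  P (\bigcap_(i in `I_n) X i @^-1` B) = ((fine (P (X0 @^-1` B))) ^+ n)%:E.
Proof.
move=> Hind Hlaw mB mXB.
have := Hind (seq_fset tt (iota 0 n)) (fun=> B) (fun _ _ => mB).
have -> : \bigcap_(i in [set` seq_fset tt (iota 0 n)]) X i @^-1` B =
          \bigcap_(i in `I_n) X i @^-1` B.
  have memI : forall i, [set` seq_fset tt (iota 0 n)] i <-> (i < n)%N.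
    move=> i; split => h.
      have := mem_set h; rewrite mem_setE seq_fsetE mem_iota add0n; exact.
    apply: set_mem; rewrite mem_setE seq_fsetE mem_iota add0n; exact: h.
  apply/seteqP; split => w h i hi; apply: h; exact/memI.
move=> ->; rewrite (perm_big _ (seq_fset_perm _ _)) undup_id ?iota_uniq //.
rewrite (eq_bigr (fun=> (fine (P (X0 @^-1` B)))%:E)); last first.
  by move=> i _; rewrite (Hlaw i B mB) -probE.
rewrite prodEFin; congr (_%:E).
have -> : iota 0 n = index_iota 0 n by rewrite /index_iota subn0.
by rewrite prodr_const_nat subn0.
Qed.

Lemma bad_bound (X : nat -> T -> R) (X0 : T -> R) (a b c3 w : R) (n N : nat) :
  mutually_independent P X -> (forall i, same_law P (X i) X0) ->
  (forall i (Y : set R), measurable Y -> measurable (X i @^-1` Y)) ->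
  (forall (Y : set R), measurable Y -> measurable (X0 @^-1` Y)) ->
  P (X0 @^-1` (~` `[a, b])) = 0%E ->
  (forall j, (j < N)%N ->
     ((c3 * w)%:E <= P (X0 @^-1` `[(a + j%:R * w)%R, (a + j%:R * w + w)%R]))%E) ->
  0 <= c3 * w ->
  (0 < n)%N -> (0 < N)%N ->
  let Good := \bigcap_(i in `I_n) X i @^-1` `[a, b] `&`
    \bigcap_(j in `I_N) \bigcup_(i in `I_n)
       X i @^-1` `[a + j%:R * w, a + j%:R * w + w] in
  measurable Good /\ (P (~` Good) <= (N%:R * (1 - c3 * w) ^+ n)%:E)%E.
Proof.
move=> Hind Hlaw mX mX0 Hab Hcell cw0 n0 N0 Good.
set cell := fun j : nat => `[a + j%:R * w, a + j%:R * w + w]%classic.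
have mcell : forall j, measurable (cell j) by move=> j; exact: measurable_itv.
have mG1 : measurable (\bigcap_(i in `I_n) X i @^-1` `[a, b]).
  apply: bigcap_measurable; first by exists 0%N.
  by move=> i _; apply: mX; exact: measurable_itv.
have mG2 : measurable (\bigcap_(j in `I_N) \bigcup_(i in `I_n) X i @^-1` cell j).
  apply: bigcap_measurable; first by exists 0%N.
  by move=> j _; apply: bigcup_measurable => i _; exact: mX.
have mGood : measurable Good by exact: measurableI.
split => //.
set U1 := \bigcup_i X i @^-1` (~` `[a, b]).
set U2 := \bigcup_(j in `I_N) \bigcap_(i in `I_n) X i @^-1` (~` cell j).
have mU1 : measurable U1.
  by apply: bigcupT_measurable => i; apply: mX; apply: measurableC; exact: measurable_itv.
have mC : forall j, measurable (\bigcap_(i in `I_n) X i @^-1` (~` cell j)).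
  move=> j; apply: bigcap_measurable; first by exists 0%N.
  by move=> i _; apply: mX; apply: measurableC.
have mU2 : measurable U2 by apply: bigcup_measurable => j _; exact: mC.
have sub : ~` Good `<=` U1 `|` U2.
  move=> w0 hw.
  have [h1|h1] := pselect (U1 w0); first by left.
  have [h2|h2] := pselect (U2 w0); first by right.
  exfalso; apply: hw; split.
    move=> i _; apply: contrapT => hc; apply: h1; exists i => //.
  move=> j hj; apply: contrapT => hc; apply: h2; exists j => // i hi hx.
  by apply: hc; exists i.
have h1 : (P (~` Good) <= P (U1 `|` U2))%E.
  exact: (le_measure P (mem_set (measurableC mGood)) (mem_set (measurableU _ _ mU1 mU2)) sub).
have h2 : (P (U1 `|` U2) <= P U1 + P U2)%E := measureU2 P mU1 mU2.
have PU1 : P U1 = 0%E.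
  apply: null_bigcup => [i|i]; first by apply: mX; apply: measurableC; exact: measurable_itv.
  rewrite (Hlaw i); first exact: Hab.
  by apply: measurableC; exact: measurable_itv.
rewrite PU1 add0e in h2.
apply: le_trans h1 (le_trans h2 _).
have h3 : (P U2 <= \sum_(j < N) P (\bigcap_(i in `I_n) X i @^-1` (~` cell j)))%E.
  rewrite /U2 bigcup_mkord; exact: (Boole_inequality P (fun j _ => mC j)).
apply: le_trans h3 _.
have h4 : forall j : 'I_N, P (\bigcap_(i in `I_n) X i @^-1` (~` cell j)) =
    ((1 - fine (P (X0 @^-1` cell j))) ^+ n)%:E.
  move=> j; rewrite (@indep_cap X X0) //; last by apply: mX0; apply: measurableC.
    congr (_ ^+ _)%:E; rewrite -preimage_setC probability_setC; last exact: mX0.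
    by rewrite (probE (mX0 _ (mcell j))).
  exact: measurableC.
rewrite (eq_bigr _ (fun j _ => h4 j)).
rewrite sumEFin lee_fin.
apply: le_trans (_ : \sum_(j < N) (1 - c3 * w) ^+ n <= _); last first.
  by rewrite sumr_const card_ord mulr_natl.
apply: ler_sum => j _.
have hj : ((c3 * w)%:E <= P (X0 @^-1` cell j))%E := Hcell j (ltn_ord j).
have p1 : P (X0 @^-1` cell j) = (fine (P (X0 @^-1` cell j)))%:E by exact: probE (mX0 _ (mcell j)).
have le1 : fine (P (X0 @^-1` cell j)) <= 1.
  rewrite -lee_fin -p1 -(probability_setT P); apply: le_measure; rewrite ?inE //; exact: mX0.
rewrite p1 lee_fin in hj.
apply: lerXn2r; rewrite ?nnegrE; lra.
Qed.

End PartD.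

Section PartE.
Variable R : realType.

Lemma exp_bound (x : R) (n : nat) : 0 <= x <= 1 -> 0 < x * n%:R ->
  (1 - x) ^+ n <= 2 / (x * n%:R) ^+ 2.
Proof.
move=> /andP[x0 x1] xn.
have h1 : (1 - x) ^+ n <= expR (- x) ^+ n.
  apply: lerXn2r; rewrite ?nnegrE ?expR_ge0 //; first lra.
  have := expR_ge1Dx (- x); lra.
have h2 : expR (- x) ^+ n = (expR (x * n%:R))^-1.
  by rewrite -expRM_natl -expRN mulrN mulrC.
have h3 : 1 + (x * n%:R) ^+ 2 / 2 <= expR (x * n%:R).
  have := @expR_ge1Dxn R (x * n%:R) 1 (ltW xn).
  by rewrite (_ : (1.+1)`!%:R = 2 :> R) //.
apply: le_trans h1 _; rewrite h2.
have p2 : 0 < (x * n%:R) ^+ 2 by rewrite exprn_gt0.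
rewrite -[leRHS]invf_div lef_pV2 ?posrE ?expR_gt0 ?divr_gt0 //.
lra.
Qed.

Lemma cvg_to1 (p : nat -> \bar R) (K0 : R) (n0 : nat) :
  (forall n, p n \is a fin_num) -> (forall n, fine (p n) <= 1) ->
  (forall n, (n0 <= n)%N -> 1 - K0 * harmonic n <= fine (p n)) ->
  p n @[n --> \oo] --> 1%E.
Proof.
move=> pfin p1 plow.
apply: cvg_EFin; first by apply: nearW.
apply: (@squeeze_cvgr _ _ _ _ (fun n => 1 - K0 * harmonic n) (fun=> 1)).
- near=> n; rewrite p1 andbT; apply: plow.
  by near: n; exact: nbhs_infty_ge.
- rewrite -[X in _ --> X]subr0; apply: cvgB; first exact: cvg_cst.
  rewrite -(mulr0 K0); apply: cvgMr; exact: cvg_harmonic.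
- exact: cvg_cst.
Unshelve. all: end_near.
Qed.

Lemma asym_hmin (L beta : R) : 0 < L -> 0 < beta ->
  exists n0 : nat, forall n : nat, (n0 <= n)%N ->
  L / 5 * (ln n%:R / n%:R) `^ (3^-1) <= (ln 2 / n%:R) `^ (1 / (2 * beta + 3)) / 8.
Proof.
move=> L0 b0.
set a := 1 / (2 * beta + 3).
have a0 : 0 < a by rewrite /a divr_gt0 //; lra.
have a3 : 3 * a < 1.
  rewrite /a mulrA mulr1 ltr_pdivrMr; lra.
set del := (1 - 3 * a) / 2.
have del0 : 0 < del by rewrite /del; lra.
set lam := ln (ln (2 : R)).
set C := ln (L / 5) - ln del / 3 + ln 8 - a * lam.
set n1 := Num.Def.archi_bound (expR (3 * C / del)).
exists (n1 + 2)%N => n hn.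
have n2 : 1 < n%:R :> R by rewrite (ltr_nat _ 1); apply: leq_trans hn; rewrite addn2.
have n0 : 0 < n%:R :> R by lra.
have ln0 : 0 < ln (n%:R : R) by apply: ln_gt0.
have l2 : 0 < ln (2 : R) by apply: ln_gt0; lra.
set t := ln (n%:R : R).
have tbig : 3 * C / del < t.
  rewrite -[X in X < _]expRK /t ltr_ln ?posrE ?expR_gt0 //.
  apply: lt_le_trans (@archi_boundP R _ (expR_ge0 _)) _.
  by rewrite ler_nat; apply: leq_trans hn; rewrite leq_addr.
have lnt : ln t <= del * t - ln del.
  have := @ln_sublinear R (del * t) (mulr_gt0 del0 ln0).
  rewrite lnM ?posrE //; lra.
have e1 : L / 5 * (ln n%:R / n%:R) `^ (3^-1) =
    expR (ln (L / 5) + 3^-1 * (ln t - t)).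
  rewrite expRD lnK ?posrE; last lra.
  congr (_ * _); rewrite /powR gt_eqF ?divr_gt0 //.
  by rewrite ln_div ?posrE.
have e2 : (ln 2 / n%:R) `^ a / 8 = expR (a * (lam - t) - ln 8).
  rewrite expRD expRN lnK ?posrE; last lra.
  congr (_ / _); rewrite /powR gt_eqF ?divr_gt0 //.
  by rewrite ln_div ?posrE.
rewrite e1 e2 ler_expR.
have hC : C = ln (L / 5) - ln del / 3 + ln 8 - a * lam by [].
have hdt : 2 * (del * t) = t - 3 * (a * t) by rewrite /del; field.
have h : 3 * C < t * del by move: tbig; rewrite ltr_pdivrMr.
have e3 : t * del = del * t by rewrite mulrC.
lra.
Qed.

End PartE.

Section PartF.
Variable R : realType.

Lemma hlo_props (beta : R) (n : nat) : 0 < beta -> (1 <= n)%N ->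
  let hl := (ln 2 / n%:R) `^ (1 / (2 * beta + 3)) in
  0 < hl /\ hl <= 1 /\ ln 2 / n%:R <= hl ^+ 3.
Proof.
move=> b0 n1 hl.
set a := 1 / (2 * beta + 3).
have a0 : 0 < a by rewrite /a divr_gt0 //; lra.
have a3 : a * 3 <= 1.
  rewrite /a mulrC mulrA mulr1 ler_pdivrMr; lra.
have nr : 1 <= n%:R :> R by rewrite (ler_nat _ 1).
have l2 : 0 < ln (2 : R) by apply: ln_gt0; lra.
have l21 : ln (2 : R) <= 1 by have := @le_ln1Dx R 1 (ltac:(lra)); rewrite (_ : 1 + 1 = 2 :> R) //.
have bb : 0 < @ln R 2 / n%:R <= 1.
  apply/andP; split; first by rewrite divr_gt0 //; lra.
  rewrite ler_pdivrMr; lra.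
have hl0 : 0 < hl by apply: powR_gt0; case/andP: bb.
split => //; split.
  rewrite /hl -/a -[leRHS](powRr0 (ln 2 / n%:R)).
  by apply: ger_powR => //; lra.
rewrite /hl -/a -powR_mulrn; last exact: ltW.
rewrite -powRrM; apply: ger1_powR => //.
Qed.

Lemma final_bound (L c3 hl : R) (n N : nat) :
  0 < L -> 0 < c3 -> 0 < hl <= 1 -> ln 2 / n%:R <= hl ^+ 3 ->
  N%:R <= 8 * L / hl + 5 -> (0 < N)%N -> (1 <= n)%N ->
  c3 * (L / N%:R) <= 1 ->
  N%:R * (1 - c3 * (L / N%:R)) ^+ n <=
    (4 * (8 * L + 5) ^+ 3 / (ln 2 * (c3 * L) ^+ 2)) * harmonic n.
Proof.
move=> L0 c0 /andP[hl0 hl1] hcube hN N0 n1 x1.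
have Nr : 0 < N%:R :> R by rewrite ltr0n.
have nr : 1 <= n%:R :> R by rewrite (ler_nat _ 1).
have l2 : 0 < ln (2 : R) by apply: ln_gt0; lra.
set x := c3 * (L / N%:R).
have x0 : 0 < x by rewrite /x mulr_gt0 // divr_gt0.
have xn : 0 < x * n%:R by rewrite mulr_gt0 //; lra.
have x01 : 0 <= x <= 1 by rewrite ltW.
have h1 := @exp_bound R x n x01 xn.
have h2 : N%:R * (1 - x) ^+ n <= N%:R * (2 / (x * n%:R) ^+ 2).
  by rewrite ler_wpM2l // ltW.
have h3 : N%:R * (2 / (x * n%:R) ^+ 2) =
    2 * N%:R ^+ 3 / ((c3 * L) ^+ 2 * n%:R ^+ 2).
  rewrite /x; field; apply/and4P; split; rewrite ?gt_eqF //; lra.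
set Y := (8 * L + 5) / hl.
have NY : N%:R <= Y.
  rewrite /Y mulrDl; apply: le_trans hN _; rewrite lerD2l.
  by rewrite ler_pdivlMr //; lra.
have h4 : N%:R ^+ 3 <= (8 * L + 5) ^+ 3 * (n%:R / ln 2).
  apply: le_trans (_ : Y ^+ 3 <= _).
    by apply: lerXn2r; rewrite ?nnegrE //; lra.
  rewrite /Y expr_div_n ler_pM2l; last by apply: exprn_gt0; lra.
  rewrite -[leRHS]invf_div lef_pV2 ?posrE ?exprn_gt0 ?divr_gt0 //; lra.
have h5 : 2 * N%:R ^+ 3 / ((c3 * L) ^+ 2 * n%:R ^+ 2) <=
    2 * ((8 * L + 5) ^+ 3 * (n%:R / ln 2)) / ((c3 * L) ^+ 2 * n%:R ^+ 2).
  have cL : 0 < c3 * L by exact: mulr_gt0.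
  have pos : 0 < (c3 * L) ^+ 2 * n%:R ^+ 2.
    by apply: mulr_gt0; apply: exprn_gt0 => //; lra.
  by rewrite ler_pM2r ?invr_gt0 // ler_pM2l.
have h6 : 2 * ((8 * L + 5) ^+ 3 * (n%:R / ln 2)) / ((c3 * L) ^+ 2 * n%:R ^+ 2)
    = (2 * (8 * L + 5) ^+ 3 / (ln 2 * (c3 * L) ^+ 2)) * n%:R^-1.
  by field; apply/and4P; split; rewrite ?gt_eqF //; lra.
have h7 : n%:R^-1 <= 2 * harmonic n :> R.
  rewrite /harmonic -natr1 ler_pdivlMr; last lra.
  rewrite mulrC ler_pdivrMr; last lra.
  by rewrite -natr1; lra.
have Q0 : 0 < 2 * (8 * L + 5) ^+ 3 / (ln 2 * (c3 * L) ^+ 2).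
  rewrite divr_gt0 // ?mulr_gt0 ?exprn_gt0 //; lra.
apply: le_trans h2 _; rewrite h3; apply: le_trans h5 _; rewrite h6.
rewrite [X in _ <= X](_ : _ = (2 * (8 * L + 5) ^+ 3 / (ln 2 * (c3 * L) ^+ 2)) * (2 * harmonic n)); last first.
  by rewrite /harmonic; field; apply/and3P; split; rewrite ?gt_eqF.
by rewrite ler_pM2l.
Qed.

End PartF.

Lemma vacuous_wpa1 (d : measure_display) (T : measurableType d)
    (R : realType) (P : probability T R) (k : R) (K : R -> R) (sl sr : \bar R)
    (beta c4 C4 c5 : R) (X : nat -> T -> R) :
  (forall x1 x2 : R, (sl <= x1%:E)%E -> (x2%:E <= sr)%E -> False) ->
  wpa1 P (fun n => [set w | A9_event k K sl sr beta c4 C4 c5 n (fun i => X i w)]).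
Proof.
move=> H; exists (fun=> setT); split.
  by move=> n; split => // w _ hn x1 x2 h1 h2; case: (H _ _ h1 h2).
rewrite probability_setT; exact: cvg_cst.
Qed.

Theorem proposition3 (d : measure_display) (T : measurableType d)
    (R : realType) (P : probability T R)
    (X0 : {RV P >-> R}) (X : nat -> {RV P >-> R})
    (k : R) (K : R -> R) :
  0 <= k ->
  mutually_independent P (fun i => X i : T -> R) ->
  (forall i, same_law P (X i) X0) ->
  assumption_A8 P X0 ->
  closure [set x | K x != 0] = `[-1, 1]%classic ->
  continuous K ->
  (forall x : R, -1 < x < 1 -> 0 < K x) ->
  forall beta : R, 0 < beta <= 1 ->
    assumption_A9 P (fun i => X i : T -> R) X0 k K beta.
Proof.
move=> k0 Hind Hlaw HA8 hcl cK Kpos beta /andP[b0 b1].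
have [M [M0 KM]] := K_bound hcl cK.
have [kap [kap0 Klow]] := K_lower cK Kpos.
have Ksupp := K_supp hcl.
have mX0 : forall Y : set R, measurable Y -> measurable (X0 @^-1` Y).
  by move=> Y mY; exact: measurable_funPTI.
have mX : forall i (Y : set R), measurable Y -> measurable ((X i : T -> R) @^-1` Y).
  by move=> i Y mY; exact: measurable_funPTI.
have [c3 [C3 [c30 [C30 HA]]]] := HA8.
exists (kap ^+ 2 * (1/16) `^ k), (M ^+ 2), (1/16).
split; first by rewrite mulr_gt0 ?exprn_gt0 // powR_gt0.
split; first by rewrite exprn_gt0.
split; first lra.
have Pl1 : forall A, measurable A -> (P A <= 1)%E.
  by move=> A mA; rewrite -(probability_setT P); apply: le_measure; rewrite ?inE.
have contra : forall x1 x2 : R, (supp_inf P X0 <= x1%:E)%E ->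
    (x2%:E <= supp_sup P X0)%E -> x2 - x1 = 2 / c3 -> False.
  move=> x1 x2 h1 h2 e.
  have le12 : x1 <= x2.
    have : 0 < 2 / c3 by rewrite divr_gt0.
    lra.
  have [hl _] := HA x1 x2 le12 h1 h2.
  have := le_trans hl (Pl1 _ (mX0 _ (measurable_itv `[x1, x2]))).
  rewrite e mulrC divfK ?gt_eqF // lee_fin; lra.
case E1 : (supp_inf P X0) => [a| |]; case E2 : (supp_sup P X0) => [b| |].
2: by exfalso; apply: (contra a (a + 2 / c3)); rewrite ?E1 ?E2 ?leey //; ring.
2: by apply: vacuous_wpa1 => x1 x2 _; rewrite leeNy_eq.
2,3,4: by apply: vacuous_wpa1 => x1 x2; rewrite leye_eq.
2: by exfalso; apply: (contra (b - 2 / c3) b); rewrite ?E1 ?E2 ?leNye //; ring.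
2: by exfalso; apply: (contra 0 (2 / c3)); rewrite ?E1 ?E2 ?leNye ?leey //; ring.
2: by apply: vacuous_wpa1 => x1 x2 _; rewrite leeNy_eq.
have Pleft : P (X0 @^-1` `]-oo, a[) = 0%E := supp_left mX0 E1.
have Pright : P (X0 @^-1` `]b, +oo[) = 0%E := supp_right mX0 E2.
have mA : measurable (X0 @^-1` `]-oo, a[) by apply: mX0; exact: measurable_itv.
have mB : measurable (X0 @^-1` `]b, +oo[) by apply: mX0; exact: measurable_itv.
have mI : measurable (X0 @^-1` `[a, b]) by apply: mX0; exact: measurable_itv.
have Hab : P (X0 @^-1` (~` `[a, b])) = 0%E.
  apply/eqP; rewrite eq_le measure_ge0 andbT.
  have sub : X0 @^-1` (~` `[a, b]) `<=` X0 @^-1` `]-oo, a[ `|` X0 @^-1` `]b, +oo[.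
    move=> w /= h; have [ha|ha] := ltP (X0 w) a.
      by left; rewrite /= in_itv.
    right; rewrite /= in_itv /= andbT ltNge; apply/negP => hb; apply: h.
    by rewrite /= in_itv /= ha hb.
  have h1 : (P (X0 @^-1` (~` `[a, b])) <= P (X0 @^-1` `]-oo, a[ `|` X0 @^-1` `]b, +oo[))%E.
    apply: le_measure => //; rewrite inE //; first by rewrite -preimage_setC; exact: measurableC.
    exact: measurableU.
  have h2 : (P (X0 @^-1` `]-oo, a[ `|` X0 @^-1` `]b, +oo[) <=
     P (X0 @^-1` `]-oo, a[) + P (X0 @^-1` `]b, +oo[))%E := measureU2 P mA mB.
  rewrite Pleft Pright adde0 in h2.
  exact: le_trans h1 h2.
have P1 : P (X0 @^-1` `[a, b]) = 1%E.
  have e := probability_setC P mI; rewrite preimage_setC Hab in e.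
  rewrite (probE P mI) in e *.
  move: e; rewrite -EFinB => -[] /eqP; rewrite eq_sym subr_eq0 => /eqP <-.
  by [].
have ab : a < b.
  have le_ab : a <= b.
    rewrite leNgt; apply/negP => ba.
    have e0 : X0 @^-1` `[a, b] = set0.
      apply/seteqP; split => // w /=; rewrite in_itv /= => /andP[h1 h2]; lra.
    by move: P1; rewrite e0 measure0 => -[] /eqP; rewrite eq_sym oner_eq0.
  have ea : (supp_inf P X0 <= a%:E)%E by rewrite E1.
  have eb : (b%:E <= supp_sup P X0)%E by rewrite E2.
  have [_ hu] := HA a b le_ab ea eb.
  rewrite P1 lee_fin in hu.
  rewrite lt_neqAle le_ab andbT; apply/eqP => eab; move: hu.
  by rewrite eab subrr mulr0; lra.
set L := b - a.
have L0 : 0 < L by rewrite /L; lra.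
have [n1 hn1] := asym_hmin L0 b0.
set hlo := fun n : nat => (ln 2 / n%:R) `^ (1 / (2 * beta + 3)) : R.
set NN := fun n : nat => (Num.Def.trunc (8 * L / hlo n) + 5)%N.
set ww := fun n : nat => L / (NN n)%:R.
have NN5 : forall n, (5 <= NN n)%N by move=> n; rewrite /NN leq_addl.
have NN0 : forall n, (0 < NN n)%N by move=> n; apply: leq_trans (NN5 n).
have ww0 : forall n, 0 < ww n by move=> n; rewrite /ww divr_gt0 // ltr0n.
have NNw : forall n, (NN n)%:R * ww n = L.
  by move=> n; rewrite /ww mulrC divfK // gt_eqF // ltr0n.
have Hcell : forall n j, (j < NN n)%N ->
    ((c3 * ww n)%:E <= P (X0 @^-1` `[(a + j%:R * ww n)%R, (a + j%:R * ww n + ww n)%R]))%E.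
  move=> n j jN.
  have jw : 0 <= j%:R * ww n by rewrite mulr_ge0 // ltW.
  have jN' : j%:R * ww n + ww n <= L.
    have : (j.+1)%:R * ww n <= (NN n)%:R * ww n by rewrite ler_pM2r // ler_nat.
    by rewrite -natr1 mulrDl mul1r NNw.
  have [hl _] := HA (a + j%:R * ww n) (a + j%:R * ww n + ww n) (ltac:(have := ww0 n; lra))
    (ltac:(rewrite E1 lee_fin; lra)) (ltac:(rewrite E2 lee_fin /L in jN' *; lra)).
  by move: hl; rewrite (_ : a + j%:R * ww n + ww n - (a + j%:R * ww n) = ww n) //; ring.
have cw1 : forall n, c3 * ww n <= 1.
  move=> n; have := Hcell n 0%N (NN0 n).
  move/le_trans => /(_ _ (Pl1 _ (mX0 _ (measurable_itv _)))).
  by rewrite lee_fin.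
have cw0 : forall n, 0 <= c3 * ww n by move=> n; rewrite mulr_ge0 // ltW.
exists (fun n => if (n1 + 2 <= n)%N then
  \bigcap_(i in `I_n) (X i : T -> R) @^-1` `[a, b] `&`
  \bigcap_(j in `I_(NN n)) \bigcup_(i in `I_n)
     (X i : T -> R) @^-1` `[a + j%:R * ww n, a + j%:R * ww n + ww n]
  else set0).
have n0 : forall n, (n1 + 2 <= n)%N -> (0 < n)%N.
  by move=> n hn; apply: leq_trans hn; rewrite addn2.
split.
  move=> n; case: ifPn => hn; last by split => //; exact: measurable0.
  have [mG _] := @bad_bound d T R P (fun i => X i : T -> R) X0 a b c3 (ww n) n (NN n)
    Hind Hlaw mX mX0 Hab (Hcell n) (cw0 n) (n0 n hn) (NN0 n).
  split; first exact: mG.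
  move=> w [G1 G2] /=.
  have [hl0 [hl1 hl3]] := @hlo_props R beta n b0 (n0 n hn).
  apply: (@det_event R k beta K M kap n (NN n) (fun i => X i w) a b) => //.
  - by apply: leq_trans hn; rewrite leq_addl.
  - rewrite -/L -/(ww n) -/(hlo n).
    have := truncnS_gt (8 * L / hlo n).
    rewrite -/(NN n) => _.
    have h : 8 * L / hlo n < (NN n)%:R.
      apply: lt_le_trans (truncnS_gt (8 * L / hlo n)) _.
      by rewrite ler_nat /NN -addn1 leq_add2l.
    rewrite /ww mulrA ler_pdivrMr ?ltr0n //.
    have hl0' : 0 < hlo n := hl0.
    by rewrite ltr_pdivrMr // in h; rewrite [X in _ <= X]mulrC; exact: ltW.
  - apply: hn1; apply: leq_trans hn; exact: leq_addr.
set K0 := 4 * (8 * L + 5) ^+ 3 / (ln 2 * (c3 * L) ^+ 2).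
apply: (@cvg_to1 R _ K0 (n1 + 2)).
- move=> n; case: ifPn => hn; last by rewrite measure0.
  have [mG _] := @bad_bound d T R P (fun i => X i : T -> R) X0 a b c3 (ww n) n (NN n)
    Hind Hlaw mX mX0 Hab (Hcell n) (cw0 n) (n0 n hn) (NN0 n).
  exact: fin_num_measure.
- move=> n; case: ifPn => hn; last by rewrite measure0.
  have [mG _] := @bad_bound d T R P (fun i => X i : T -> R) X0 a b c3 (ww n) n (NN n)
    Hind Hlaw mX mX0 Hab (Hcell n) (cw0 n) (n0 n hn) (NN0 n).
  by rewrite -lee_fin -(probE P) //; exact: Pl1.
move=> n hn; rewrite hn.
have [mG hG] := @bad_bound d T R P (fun i => X i : T -> R) X0 a b c3 (ww n) n (NN n)
  Hind Hlaw mX mX0 Hab (Hcell n) (cw0 n) (n0 n hn) (NN0 n).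
move: mG hG => /=; set G := (_ `&` _) => mG hG.
have [hl0 [hl1 hl3]] := @hlo_props R beta n b0 (n0 n hn).
have hl01 : 0 < hlo n <= 1 by rewrite hl0 hl1.
have hl0' : 0 < hlo n := hl0.
have NNle : (NN n)%:R <= 8 * L / hlo n + 5.
  rewrite /NN natrD; apply: lerD => //.
  by rewrite truncn_le divr_ge0 // ?ltW //; lra.
have fb := @final_bound R L c3 (hlo n) n (NN n) L0 c30 hl01 hl3 NNle
  (NN0 n) (n0 n hn) (cw1 n).
have e := probability_setC P mG.
rewrite (probE P mG) (probE P (measurableC mG)) -EFinB in e.
case: e => e.
rewrite (probE P (measurableC mG)) lee_fin in hG.
rewrite -/(ww n) /harmonic in fb.
have hfb := le_trans hG fb.
have -> : fine (P G) = 1 - fine (P (~` G)) by rewrite e; ring.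
rewrite lerD2l lerN2.
exact: hfb.
Qed.
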